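(* Let $a_0,a_1,a_2,a_3\in\mathbb{R}$ and for real $\lambda$ let $$\mathbf{M}_\lambda=\begin{bmatrix}1&\frac{a_3}{2}&\frac{a_2-\lambda}{2}\\[2pt] \frac{a_3}{2}&\lambda&\frac{a_1}{2}\\[2pt] \frac{a_2-\lambda}{2}&\frac{a_1}{2}&a_0\end{bmatrix}.$$ If $\lambda_i\in\mathbb{R}$ is such that the conic $\mathbf{M}_{\lambda_i}$ is a degenerate conic consisting of a complex conjugate line-pair, then $\operatorname{rank}\mathbf{M}_{\lambda_i}=2$ and $\lambda_i\ge \frac{a_3^2}{4}$.
   Context: A real symmetric $3\times3$ matrix $\mathbf{M}$ defines the conic $\{[u:v:w]\in\mathbb{P}^2(\mathbb{C}) : (u,v,w)\mathbf{M}(u,v,w)^T=0\}$. The conic ''consists of a complex conjugate line-pair'' if the quadratic form $(u,v,w)\mathbf{M}(u,v,w)^T$ factors as $\ell\,\bar\ell$ where $\ell$ is a linear form with complex coefficients not proportional to any real linear form and $\bar\ell$ is its complex conjugate. *)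

(* Defs.v *)
From HB Require Import structures.
From mathcomp Require Import all_boot all_order all_algebra.
From mathcomp Require Import complex.
Set Implicit Arguments. Unset Strict Implicit. Unset Printing Implicit Defensive.
Import Order.TTheory GRing.Theory Num.Theory.
Local Open Scope ring_scope.

Definition Mlam (R : rcfType) (a0 a1 a2 a3 l : R) : 'M[R]_3 :=
  \matrix_(i < 3, j < 3)
    nth 0 (nth [::] [:: [:: 1; a3 / 2; (a2 - l) / 2];
                        [:: a3 / 2; l; a1 / 2];
                        [:: (a2 - l) / 2; a1 / 2; a0]] i) j.

Definition qformC (R : rcfType) (M : 'M[R]_3) (x : 'I_3 -> R[i]) : R[i] :=
  \sum_(i < 3) \sum_(j < 3) x i * real_complex R (M i j) * x j.

Definition linformC (R : rcfType) (c : 'I_3 -> R[i]) (x : 'I_3 -> R[i]) : R[i] :=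
  \sum_(i < 3) c i * x i.

(* The conic M consists of a complex conjugate line-pair: its quadratic form
   factors as l * conj(l), with l a complex linear form not proportional to any
   real linear form. *)
Definition conj_line_pair (R : rcfType) (M : 'M[R]_3) : Prop :=
  exists c : 'I_3 -> R[i],
    (forall x : 'I_3 -> R[i],
        qformC M x = linformC c x * linformC (fun i => conjc (c i)) x)
    /\ ~ (exists (k : R[i]) (r : 'I_3 -> R),
            forall i, c i = k * real_complex R (r i)).

(* Main.v *)
Require Import Defs.
From HB Require Import structures.
From mathcomp Require Import all_boot all_order all_algebra.
From mathcomp Require Import complex.
From mathcomp Require Import ring lra.
Import Order.TTheory GRing.Theory Num.Theory.
Local Open Scope ring_scope.

Lemma key (R : rcfType) (a0 a1 a2 a3 l : R) (c : 'I_3 -> R[i]) (p q : nat -> R) :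
  (forall x : 'I_3 -> R[i],
        qformC (Mlam a0 a1 a2 a3 l) x = linformC c x * linformC (fun i => conjc (c i)) x) ->
  (forall k, c (inord k) = Complex (p k) (q k)) ->
  forall u v w,
  u*u + a3*u*v + (a2 - l)*u*w + l*v*v + a1*v*w + a0*w*w =
  (p 0%N * u + p 1%N * v + p 2%N * w)^+2 + (q 0%N * u + q 1%N * v + q 2%N * w)^+2.
Proof.
move=> Hid Hc u v w.
move/(_ (fun k => real_complex R (nth 0 [:: u; v; w] k))): Hid.
rewrite /qformC /linformC !big_ord_recl !big_ord0 !mxE /=.
have E0 : ord0 = inord 0 :> 'I_3 by apply/val_inj; rewrite /= inordK.
have E1 : lift ord0 ord0 = inord 1 :> 'I_3 by apply/val_inj; rewrite /= inordK.
have E2 : lift ord0 (lift ord0 ord0) = inord 2 :> 'I_3 by apply/val_inj; rewrite /= inordK.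
rewrite E2 E1 E0 !Hc /bump /=.
move/eqP; rewrite eq_complex /= => /andP[/eqP H _].
cbn in H.
move: H; set X := (_ + _ = _); rewrite {}/X => H.
apply: etrans (etrans H _); [field | ring].
all: done.
Qed.

Lemma rank_mxsub_le (F : fieldType) m n m' n' (f : 'I_m' -> 'I_m) (g : 'I_n' -> 'I_n)
  (A : 'M[F]_(m, n)) : (\rank (mxsub f g A) <= \rank A)%N.
Proof.
have -> : mxsub f g A = mxsub f id 1%:M *m (A *m mxsub id g 1%:M).
  by rewrite mulmx_colsub mul_rowsub_mx mul1mx mulmx1; apply/matrixP => i j; rewrite !mxE.
exact: leq_trans (mxrankM_maxr _ _) (mxrankM_maxl _ _).
Qed.

Lemma det2 (F : comRingType) (A : 'M[F]_2) : \det A = A 0 0 * A 1 1 - A 0 1 * A 1 0.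
Proof.
rewrite (expand_det_row _ 0) !big_ord_recl big_ord0 /cofactor !det_mx11 !mxE /=.
try have -> : lift 0 0 = 1 :> 'I_2 by apply/val_inj.
try have -> : lift (lift ord0 ord0) 0 = 0 :> 'I_2 by apply/val_inj.
try have -> : lift ord0 ord0 = 1 :> 'I_2 by apply/val_inj.
try have -> : lift ord0 0 = 1 :> 'I_2 by apply/val_inj.
try have -> : ord0 = 0 :> 'I_2 by apply/val_inj.
rewrite /= expr0 expr1.
have -> : lift 1 0 = 0 :> 'I_2 by apply/val_inj.
ring.
Qed.

Lemma rank_ge2 (F : fieldType) (A : 'M[F]_3) (i j : 'I_3) :
  A i i * A j j - A i j * A j i != 0 -> (2 <= \rank A)%N.
Proof.
move=> H.
pose f := fun a : 'I_2 => if a == 0 then i else j.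
have := @rank_mxsub_le _ _ _ _ _ f f A.
have -> : \rank (mxsub f f A) = 2%N.
  apply: mxrank_unit; rewrite unitmxE unitfE det2 !mxE /f /=.
  by [].
by [].
Qed.

Theorem lemma2 (R : rcfType) (a0 a1 a2 a3 li : R) :
  conj_line_pair (Mlam a0 a1 a2 a3 li) ->
  \rank (Mlam a0 a1 a2 a3 li) = 2%N /\ a3 ^+ 2 / 4 <= li.
Proof.
case=> c [Hid Hnp].
pose p := fun k : nat => complex.Re (c (inord k)).
pose q := fun k : nat => complex.Im (c (inord k)).
have Hc : forall k, c (inord k) = Complex (p k) (q k) by move=> k; rewrite /p /q; case: (c _).
have K := @key _ _ _ _ _ _ _ _ _ Hid Hc.
move: Hc K; move: p q => p q Hc K.
have e00 := K 1 0 0. have e11 := K 0 1 0. have e22 := K 0 0 1.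
have e01 := K 1 1 0. have e02 := K 1 0 1. have e12 := K 0 1 1.
split; last first.
  have H := K (- a3 / 2) 1 0.
  have S := addr_ge0 (sqr_ge0 (p 0%N * (- a3 / 2) + p 1%N * 1 + p 2%N * 0))
                     (sqr_ge0 (q 0%N * (- a3 / 2) + q 1%N * 1 + q 2%N * 0)).
  rewrite -H in S.
  nra.
apply/eqP; rewrite eqn_leq; apply/andP; split.
  pose P : 'M[R]_(3,2) := \matrix_(i < 3, j < 2) (if (j : nat) == 0%N then p i else q i).
  have -> : Mlam a0 a1 a2 a3 li = P *m P^T.
    apply/matrixP => i j; rewrite !mxE !big_ord_recl big_ord0 !mxE /=.
    case: i => [[|[|[|i]]] Hi] //; case: j => [[|[|[|j]]] Hj] //=; lra.
  exact: leq_trans (mxrankM_maxr _ _) (rank_leq_row _).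
have h00 : 1 = (p 0%N) ^+ 2 + (q 0%N) ^+ 2 by nra.
have h11 : li = (p 1%N) ^+ 2 + (q 1%N) ^+ 2 by nra.
have h22 : a0 = (p 2%N) ^+ 2 + (q 2%N) ^+ 2 by nra.
have h01 : a3 / 2 = (p 0%N) * (p 1%N) + (q 0%N) * (q 1%N) by nra.
have h02 : (a2 - li) / 2 = (p 0%N) * (p 2%N) + (q 0%N) * (q 2%N) by nra.
have h12 : a1 / 2 = (p 1%N) * (p 2%N) + (q 1%N) * (q 2%N) by nra.
have [d01|d01] := eqVneq ((p 0%N) * (q 1%N) - (p 1%N) * (q 0%N)) 0; last first.
  apply: (@rank_ge2 _ _ (Ordinal (isT : (0 < 3)%N)) (Ordinal (isT : (1 < 3)%N))).
  rewrite !mxE /=.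
  rewrite [in X in X * li]h00 h11 h01.
  have -> : ((p 0%N) ^+ 2 + (q 0%N) ^+ 2) * ((p 1%N) ^+ 2 + (q 1%N) ^+ 2) - ((p 0%N) * (p 1%N) + (q 0%N) * (q 1%N)) * ((p 0%N) * (p 1%N) + (q 0%N) * (q 1%N)) = ((p 0%N) * (q 1%N) - (p 1%N) * (q 0%N)) ^+ 2 by ring.
  by rewrite sqrf_eq0.
have [d02|d02] := eqVneq ((p 0%N) * (q 2%N) - (p 2%N) * (q 0%N)) 0; last first.
  apply: (@rank_ge2 _ _ (Ordinal (isT : (0 < 3)%N)) (Ordinal (isT : (2 < 3)%N))).
  rewrite !mxE /=.
  rewrite [in X in X * a0]h00 h22 h02.
  have -> : ((p 0%N) ^+ 2 + (q 0%N) ^+ 2) * ((p 2%N) ^+ 2 + (q 2%N) ^+ 2) - ((p 0%N) * (p 2%N) + (q 0%N) * (q 2%N)) * ((p 0%N) * (p 2%N) + (q 0%N) * (q 2%N)) = ((p 0%N) * (q 2%N) - (p 2%N) * (q 0%N)) ^+ 2 by ring.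
  by rewrite sqrf_eq0.
have [d12|d12] := eqVneq ((p 1%N) * (q 2%N) - (p 2%N) * (q 1%N)) 0; last first.
  apply: (@rank_ge2 _ _ (Ordinal (isT : (1 < 3)%N)) (Ordinal (isT : (2 < 3)%N))).
  rewrite !mxE /=.
  rewrite h11 h22 h12.
  have -> : ((p 1%N) ^+ 2 + (q 1%N) ^+ 2) * ((p 2%N) ^+ 2 + (q 2%N) ^+ 2) - ((p 1%N) * (p 2%N) + (q 1%N) * (q 2%N)) * ((p 1%N) * (p 2%N) + (q 1%N) * (q 2%N)) = ((p 1%N) * (q 2%N) - (p 2%N) * (q 1%N)) ^+ 2 by ring.
  by rewrite sqrf_eq0.
exfalso.
have rel : forall (i : 'I_3) j, (j < 3)%N -> p i * q j = p j * q i.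
  move=> [[|[|[|i]]] Hi] // [|[|[|j]]] // _ /=; lra.
have W : forall j, (j < 3)%N -> p j != 0 -> False.
  move=> j jlt pj; apply: Hnp; exists (Complex 1 (q j / p j)); exists (fun i => p i).
  move=> i; have -> : c i = c (inord i) by rewrite inord_val.
  rewrite Hc; apply/eqP; rewrite eq_complex /=; apply/andP; split; apply/eqP; cbn.
    ring.
  have := rel i j jlt; move: pj; move: (p j) (q j) (p i) (q i) => a b x y ab H.
  by rewrite -[y](mulKf ab) -H; field.
have [p0|p0] := eqVneq ((p 0%N)) 0; last exact: (W 0%N).
have [p1|p1] := eqVneq ((p 1%N)) 0; last exact: (W 1%N).
have [p2|p2] := eqVneq ((p 2%N)) 0; last exact: (W 2%N).
apply: Hnp; exists (Complex 0 1); exists (fun i => q i).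
move=> [[|[|[|i]]] Hi] //; rewrite -[Ordinal Hi]inord_val Hc /=;
  apply/eqP; rewrite eq_complex /=; apply/andP; split; apply/eqP; cbn; rewrite ?inordK //;
  rewrite ?p0 ?p1 ?p2; ring.
Qed.
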